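(* Let $N\ge 2$ be an integer, let $T\ge 0$ be a real number, and let $\hat{\boldsymbol{A}}=(\hat A_1,\dots,\hat A_N)$, $\hat{\boldsymbol{B}}=(\hat B_1,\dots,\hat B_N)$ be vectors with $\hat A_i\ge 0$, $\hat B_i\ge 0$ for all $i$ and $\sum_{i=1}^N\hat A_i=\sum_{i=1}^N\hat B_i=T$. Put $\hat S_i=\hat A_i+\hat B_i$. Suppose $\hat S_i\le T$ for all $i=1,\dots,N$. Then $\hat L_{\min}=0$; that is, there exists an $N\times N$ real matrix $\hat{\boldsymbol{P}}=(\hat p_{i,j})$ with $\hat p_{i,i}=0$ for all $i$, $\hat p_{i,j}\ge 0$ for all $i,j$, $\sum_{i,j}\hat p_{i,j}=T$, such that $$\hat L=\sum_{i=1}^N\Big(\sum_{j=1}^N\hat p_{i,j}-\hat A_i\Big)^2+\sum_{j=1}^N\Big(\sum_{i=1}^N\hat p_{i,j}-\hat B_j\Big)^2=0,$$ i.e. $\sum_j\hat p_{i,j}=\hat A_i$ for all $i$ and $\sum_i\hat p_{i,j}=\hat B_j$ for all $j$.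
   Context: Here $\hat L_{\min}$ denotes the minimum of $\hat L$ over all $N\times N$ matrices $\hat{\boldsymbol P}$ with zero diagonal, nonnegative entries and total entry sum $T$. $T$ is called the total preference and $\hat S_i$ the popularity of arm $i$. *)

(* Defs.v *)
From mathcomp Require Import all_boot all_order all_algebra.
From mathcomp Require Import reals.
Set Implicit Arguments. Unset Strict Implicit. Unset Printing Implicit Defensive.
Import Order.TTheory GRing.Theory Num.Theory.
Local Open Scope ring_scope.

Definition Lhat (R : realType) (N : nat) (A B : 'I_N -> R) (P : 'M[R]_N) : R :=
  \sum_(i < N) (\sum_(j < N) P i j - A i) ^+ 2
  + \sum_(j < N) (\sum_(i < N) P i j - B j) ^+ 2.

Definition admissible (R : realType) (N : nat) (T : R) (P : 'M[R]_N) : Prop :=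
  (forall i, P i i = 0) /\ (forall i j, 0 <= P i j) /\
  \sum_(i < N) \sum_(j < N) P i j = T.

(* Main.v *)
Require Import Defs.
From mathcomp Require Import all_boot all_order all_algebra.
From mathcomp Require Import reals.
From mathcomp Require Import ring lra zify.
Import Order.TTheory GRing.Theory Num.Theory.
Local Open Scope ring_scope.

Section S.
Set Implicit Arguments.
Variable R : realType.
Variable N : nat.
Implicit Types (A B : 'I_N -> R).

Definition cond A B (T : R) := (forall i, 0 <= A i) /\ (forall i, 0 <= B i) /\
  \sum_(i < N) A i = T /\ \sum_(i < N) B i = T /\ (forall i, A i + B i <= T).
Definition good A B (P : 'M[R]_N) := (forall l, P l l = 0) /\ (forall l m, 0 <= P l m) /\
  (forall l, \sum_(m < N) P l m = A l) /\ (forall m, \sum_(l < N) P l m = B m).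
Definition upd A (i : 'I_N) (x : R) := fun k => if k == i then A i - x else A k.
Definition nnz A := #|[pred k | A k != 0]|.

Lemma sum_if1 (i : 'I_N) (x : R) : \sum_(k < N) (if k == i then x else 0) = x.
Proof. by rewrite -big_mkcond big_pred1_eq. Qed.

Lemma sum_upd A i x : \sum_(k < N) upd A i x k = \sum_(k < N) A k - x.
Proof.
have -> : \sum_(k < N) upd A i x k = \sum_(k < N) (A k - (if k == i then x else 0)).
  by apply: eq_bigr => k _; rewrite /upd; case: eqVneq => [->|]; rewrite ?subr0.
by rewrite sumrB sum_if1.
Qed.

Lemma sum_excl A (k : 'I_N) : \sum_(m < N) (if m == k then 0 else A m) = \sum_(m < N) A m - A k.
Proof.
have -> : \sum_(m < N) (if m == k then 0 else A m) = \sum_(m < N) (A m - (if m == k then A k else 0)).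
  by apply: eq_bigr => m _; case: eqVneq => [->|]; rewrite ?subr0 ?subrr.
by rewrite sumrB sum_if1.
Qed.

Lemma tight_case A B T k : cond A B T -> A k + B k = T -> exists P, good A B P.
Proof.
case=> [A0 [B0 [sA [sB _]]]] hk.
exists (\matrix_(l, m) (if l == k then (if m == k then 0 else B m) else (if m == k then A l else 0))).
split; [|split; [|split]].
- by move=> l; rewrite mxE; case: (eqVneq l k).
- by move=> l m; rewrite mxE; do 2 case: ifP => _ //.
- move=> l; under eq_bigr do rewrite mxE.
  case: (eqVneq l k) => [->|h].
  + rewrite sum_excl sB; lra.
  + by rewrite sum_if1.
- move=> m; under eq_bigr do rewrite mxE.
  case: (eqVneq m k) => [->|h].
  + have -> : \sum_(i < N) (if i == k then 0 else A i) = \sum_(i < N) A i - A k by apply: sum_excl.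
    rewrite sA; lra.
  + have -> : \sum_(i < N) (if i == k then B m else 0) = B m by apply: sum_if1.
    by [].
Qed.

Lemma seqmin (I : eqType) (s : seq I) (f : I -> R) (d : R) :
  exists v, v <= d /\ (forall k, k \in s -> v <= f k) /\ (v = d \/ exists2 k, k \in s & v = f k).
Proof.
elim: s => [|a s [v [vd [vs ve]]]].
- by exists d; split => //; split => //; left.
- case: (lerP (f a) v) => h.
  + exists (f a); split; first exact: le_trans h vd.
    split; last by right; exists a; rewrite ?mem_head.
    move=> k; rewrite in_cons => /orP [/eqP ->|ks] //.
    exact: le_trans h (vs _ ks).
  + exists v; split => //; split.
    * move=> k; rewrite in_cons => /orP [/eqP ->|ks]; [exact: ltW | exact: vs].
    * case: ve => [->|[k ks ->]]; [by left | right; exists k => //; by rewrite in_cons ks orbT].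
Qed.

Lemma nnz_le A i x : 0 <= x -> x <= A i -> (nnz (upd A i x) <= nnz A)%N.
Proof.
move=> x0 xA; apply: subset_leq_card; apply/subsetP => k; rewrite !inE /upd.
case: (eqVneq k i) => [->|_] //=; apply: contra => /eqP h.
have hx : x = 0 by apply/eqP; rewrite eq_le x0 -h xA.
by rewrite h hx subr0.
Qed.

Lemma nnz_lt A i x : A i != 0 -> x = A i -> (nnz (upd A i x) < nnz A)%N.
Proof.
move=> Ai hx; apply: proper_card; apply/properP; split.
- apply/subsetP => k; rewrite !inE /upd.
  case: (eqVneq k i) => [->|_] //=; by rewrite hx subrr eqxx.
- by exists i; rewrite !inE /upd ?eqxx //= hx subrr eqxx.
Qed.

Lemma build A B i j x P : i != j -> 0 <= x -> good (upd A i x) (upd B j x) P ->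
  exists Q, good A B Q.
Proof.
move=> ij x0 [d [nn [rw cl]]].
exists (\matrix_(l, m) (P l m + (if (l == i) && (m == j) then x else 0))).
split; [|split; [|split]].
- move=> l; rewrite mxE d add0r; case: (eqVneq l i) => [->|] //=; by rewrite (negbTE ij).
- move=> l m; rewrite mxE; apply: addr_ge0 => //; by case: ifP.
- move=> l; under eq_bigr do rewrite mxE. rewrite big_split /= rw /upd.
  case: (eqVneq l i) => [->|h] /=.
  + rewrite sum_if1; lra.
  + by rewrite big1 ?addr0.
- move=> m; under eq_bigr do rewrite mxE. rewrite big_split /= cl /upd.
  case: (eqVneq m j) => [->|h] /=.
  + under eq_bigr do rewrite andbT. rewrite sum_if1; lra.
  + under eq_bigr do rewrite andbF. by rewrite big1 ?addr0.
Qed.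

Lemma step A B T :
  (forall A' B' T', cond A' B' T' -> (nnz A' + nnz B' < nnz A + nnz B)%N ->
      exists P, good A' B' P) ->
  cond A B T -> exists P, good A B P.
Proof.
move=> IH c; have [A0 [B0 [sA [sB hS]]]] := c.
case: (pickP (fun k => A k != 0)) => [i Ai | Az]; last first.
  have T0 : T = 0 by rewrite -sA big1 // => k _; apply/eqP; move: (Az k) => /= /negbFE.
  have Bz : forall k, B k = 0.
    have h0 : \sum_(i < N) B i = 0 by rewrite sB.
    move=> k; exact: (@psumr_eq0P _ _ xpredT B (fun m _ => B0 m) h0 k isT).
  exists 0; split; [|split; [|split]].
  - by move=> l; rewrite mxE.
  - by move=> l m; rewrite mxE.
  - move=> l; rewrite big1; last by move=> m _; rewrite mxE.
    by apply/esym/eqP; move: (Az l) => /= /negbFE.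
  - by move=> m; rewrite big1 ?Bz // => l _; rewrite mxE.
case: (pickP (fun k => (k != i) && (B k != 0))) => [j /andP [ji Bj] | Bn]; last first.
  exfalso.
  have hBi : B i = T.
    rewrite -sB (bigD1 i) //= big1 ?addr0 // => k ki.
    by move: (Bn k) => /=; rewrite ki /= => /negbFE /eqP.
  have := hS i; have := A0 i; rewrite hBi => h1 h2.
  have : A i = 0 by lra.
  by move/eqP; rewrite (negbTE Ai).
have ij : i != j by rewrite eq_sym.
have [v [vd [vs ve]]] := @seqmin _ (enum [pred k | (k != i) && (k != j)])
   (fun k => T - (A k + B k)) (Num.min (A i) (B j)).
have vA : v <= A i by apply: le_trans vd _; rewrite ge_min lexx.
have vB : v <= B j by apply: le_trans vd _; rewrite ge_min lexx orbT.
have v0 : 0 <= v.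
  case: ve => [->|[k _ ->]]; first by rewrite le_min A0 B0.
  by rewrite subr_ge0.
have c' : cond (upd A i v) (upd B j v) (T - v).
  split; [|split; [|split; [|split]]].
  - by move=> k; rewrite /upd; case: ifP => _ //; rewrite subr_ge0.
  - by move=> k; rewrite /upd; case: ifP => _ //; rewrite subr_ge0.
  - by rewrite sum_upd sA.
  - by rewrite sum_upd sB.
  - move=> k; rewrite /upd.
    case: (eqVneq k i) => [->|ki].
      rewrite (negbTE ij); have := hS i; lra.
    case: (eqVneq k j) => [->|kj].
      have := hS j; lra.
    have : v <= T - (A k + B k) by apply: vs; rewrite mem_enum inE ki kj.
    lra.
case: (pickP (fun k => upd A i v k + upd B j v k == T - v)) => [k /eqP tk | nt].
  have [P gP] := tight_case k c' tk.
  exact: (@build A B i j v P ij v0 gP).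
have [P gP] : exists P, good (upd A i v) (upd B j v) P.
  apply: IH c' _.
  have hA := @nnz_le A i v v0 vA; have hB := @nnz_le B j v v0 vB.
  case: ve => [hv|[k ks hv]].
  - have : v = A i \/ v = B j.
      rewrite hv minEle; case: ifP => _; [by left | by right].
    case=> e.
    + have := @nnz_lt A i v Ai e; move: hB; clear; lia.
    + have := @nnz_lt B j v Bj e; move: hA; clear; lia.
  - exfalso; move: (nt k) => /=; move: ks; rewrite mem_enum inE => /andP [ki kj].
    by rewrite /upd (negbTE ki) (negbTE kj) hv; lra.
exact: (@build A B i j v P ij v0 gP).
Qed.

Lemma main n : forall A B T, cond A B T -> (nnz A + nnz B <= n)%N -> exists P, good A B P.
Proof.
elim: n => [|n IHn] A B T c hn; apply: (@step A B T _ c) => A' B' T' c' lt.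
- by move: hn lt; clear; lia.
- apply: (@IHn A' B' T' c'); move: hn lt; clear; lia.
Qed.

End S.

Theorem lemma2p1 (R : realType) (N : nat) (T : R) (A B : 'I_N -> R) :
  (2 <= N)%N -> 0 <= T ->
  (forall i, 0 <= A i) -> (forall i, 0 <= B i) ->
  \sum_(i < N) A i = T -> \sum_(i < N) B i = T ->
  (forall i, A i + B i <= T) ->
  exists P : 'M[R]_N, admissible T P /\ Lhat A B P = 0 /\
    (forall i, \sum_(j < N) P i j = A i) /\
    (forall j, \sum_(i < N) P i j = B j).
Proof.
move=> _ _ A0 B0 sA sB hS.
have c : @cond R N A B T by [].
have [P [d [nn [rw cl]]]] := @main R N _ A B T c (leqnn _).
exists P; split; [|split] => //.
- split => //; split => //.
  by under eq_bigr do rewrite rw.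
- rewrite /Lhat big1; last by move=> i _; rewrite rw subrr expr0n.
  by rewrite add0r big1 // => j _; rewrite cl subrr expr0n.
Qed.
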